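(* Let $G$ be a Polish group. Every openly Haar null subset $A\subseteq G$ is contained in a $G_\delta$ set that is Haar null.
   Context: A Polish group is a topological group whose topology is separable and completely metrizable. A set $A\subseteq G$ is Haar null if there are a Borel set $B\supseteq A$ and a Borel probability measure $\mu$ on $G$ with $\mu(gBh)=0$ for all $g,h\in G$. A set $A\subseteq G$ is openly Haar null if there is a Borel probability measure $\mu$ on $G$ such that for every $\varepsilon>0$ there is an open set $U\supseteq A$ with $\mu(gUh)<\varepsilon$ for all $g,h\in G$. *)

(* Defs.v *)
From HB Require Import structures.
From mathcomp Require Import all_boot all_order all_algebra.
From mathcomp Require Import all_classical all_reals all_analysis borel_hierarchy.
Set Implicit Arguments. Unset Strict Implicit. Unset Printing Implicit Defensive.
Import Order.TTheory GRing.Theory Num.Theory.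
Import numFieldNormedType.Exports.
Local Open Scope classical_set_scope.
Local Open Scope ring_scope.

Definition topological_group (T : topologicalType)
  (mul : T -> T -> T) (inv : T -> T) (one : T) : Prop :=
  [/\ (forall x y z, mul x (mul y z) = mul (mul x y) z),
      (forall x, mul one x = x /\ mul x one = x),
      (forall x, mul (inv x) x = one /\ mul x (inv x) = one),
      continuous (fun p : T * T => mul p.1 p.2) &
      continuous inv].

Definition separable_space (T : topologicalType) : Prop :=
  exists2 D : set T, countable D & dense D.

Definition completely_metrizable (R : realType) (T : topologicalType) : Prop :=
  exists d : T -> T -> R,
    [/\ (forall x y, 0 <= d x y /\ (d x y = 0 <-> x = y)),
        (forall x y, d x y = d y x),
        (forall x y z, d x z <= d x y + d y z),
        (forall U : set T, open U <->
           (forall x, U x -> exists2 r : R, 0 < r & [set y | d x y < r] `<=` U)) &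
        (forall u : nat -> T,
           (forall e : R, 0 < e -> exists N : nat, forall m n : nat,
               (N <= m)%N -> (N <= n)%N -> d (u m) (u n) < e) ->
           exists x : T, u @ \oo --> x)].

Definition polish_group (R : realType) (T : topologicalType)
  (mul : T -> T -> T) (inv : T -> T) (one : T) : Prop :=
  [/\ topological_group mul inv one, separable_space T & completely_metrizable R T].

(* The Borel sigma-algebra on T: the sigma-algebra generated by the open sets
   (T must be pointed for the library's generated-sigma-algebra instance). *)
Notation borel T := (g_sigma_algebraType (@open T)).

Definition translate (T : Type) (mul : T -> T -> T) (g h : T) (B : set T) : set T :=
  [set mul (mul g b) h | b in B].

Definition haar_null (R : realType) (T : ptopologicalType) (mul : T -> T -> T)
  (A : set T) : Prop :=
  exists B : set (borel T),
    [/\ measurable B, A `<=` B &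
        exists mu : probability (borel T) R,
          forall g h : T, mu (translate mul g h B) = 0%E].

Definition openly_haar_null (R : realType) (T : ptopologicalType)
  (mul : T -> T -> T) (A : set T) : Prop :=
  exists mu : probability (borel T) R,
    forall eps : R, 0 < eps ->
      exists U : set T, [/\ open U, A `<=` U &
        forall g h : T, (mu (translate mul g h U) < eps%:E)%E].

(* Main.v *)
Require Import Defs.
From HB Require Import structures.
From mathcomp Require Import all_boot all_order all_algebra.
From mathcomp Require Import all_classical all_reals all_analysis borel_hierarchy.
Import Order.TTheory GRing.Theory Num.Theory.
Local Open Scope classical_set_scope.

Theorem proposition4p33 (R : realType) (T : ptopologicalType)
  (mul : T -> T -> T) (inv : T -> T) (one : T)
  (HG : polish_group R mul inv one) (A : set T) :
  openly_haar_null R mul A ->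
  exists B : set T, [/\ Gdelta B, A `<=` B & haar_null R mul B].
Proof.
case: HG => [[assoc unit invax mc ic] _ _].
move=> [mu Hmu].
have : forall n : nat, exists U : set T, [/\ open U, A `<=` U &
    forall g h, (mu (translate mul g h U) < ((n.+1%:R : R)^-1)%:E)%E].
  by move=> n; apply: Hmu; rewrite invr_gt0 ltr0n.
move/choice => [U HU].
have mulK : forall g x, mul (inv g) (mul g x) = x.
  by move=> g x; rewrite assoc (invax g).1 (unit x).1.
have mulK' : forall g x, mul g (mul (inv g) x) = x.
  by move=> g x; rewrite assoc (invax g).2 (unit x).1.
have mulKr : forall h x, mul (mul x h) (inv h) = x.
  by move=> h x; rewrite -assoc (invax h).2 (unit x).2.
have mulKr' : forall h x, mul (mul x (inv h)) h = x.
  by move=> h x; rewrite -assoc (invax h).1 (unit x).2.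
have cl : forall a, continuous (mul a).
  move=> a x.
  apply: (@cvg_comp _ _ _ (fun y => (a, y)) (fun p : T * T => mul p.1 p.2) _ _ _ _ (mc (a, x))).
  by apply: cvg_pair => //; exact: cvg_cst.
have cr : forall b, continuous (mul^~ b).
  move=> b x.
  apply: (@cvg_comp _ _ _ (fun y => (y, b)) (fun p : T * T => mul p.1 p.2) _ _ _ _ (mc (x, b))).
  by apply: cvg_pair => //; exact: cvg_cst.
have topen : forall g h V, open V -> open (translate mul g h V).
  move=> g h V oV.
  have -> : translate mul g h V = (fun x => mul (mul (inv g) x) (inv h)) @^-1` V.
    rewrite eqEsubset; split.
      by move=> _ [b Vb <-] /=; rewrite assoc mulK mulKr.
    move=> x Vx; exists (mul (mul (inv g) x) (inv h)) => //.
    by rewrite assoc mulK' mulKr'.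
  apply: open_comp => // x _.
  exact: (continuous_comp (cl (inv g) x) (cr (inv h) _)).
have inj : forall g h b b', mul (mul g b) h = mul (mul g b') h -> b = b'.
  move=> g h b b' E.
  by rewrite -(mulK g b) -(mulKr h (mul g b)) E mulKr mulK.
exists (\bigcap_n U n); split.
- by exists U => // i; case: (HU i).
- by move=> x Ax n _; case: (HU n) => _ /(_ x Ax).
- exists (\bigcap_n U n); split => //.
    by apply: bigcapT_measurable => k; apply: sub_sigma_algebra; case: (HU k).
  exists mu => g h.
  have tE : translate mul g h (\bigcap_n U n) = \bigcap_n translate mul g h (U n).
    rewrite eqEsubset; split.
      by move=> _ [b Bb <-] n _; exists b => //; exact: Bb.
    move=> y Y.
    have [b0 _ E0] := Y 0%N I.
    exists b0 => // n _.
    have [bn Ubn En] := Y n I.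
    by rewrite -(inj g h bn b0) // En E0.
  have mt : forall n, measurable (translate mul g h (U n) : set (borel T)).
    by move=> n; apply: sub_sigma_algebra; apply: topen; case: (HU n).
  apply/eqP; rewrite eq_le measure_ge0 andbT.
  apply/lee_addgt0Pr => e e0; rewrite add0e.
  pose n := Num.truncn e^-1.
  apply: (@le_trans _ _ (mu (translate mul g h (U n)))).
    apply: le_measure; rewrite ?inE //.
      by rewrite tE; exact: bigcapT_measurable.
    by rewrite tE; exact: bigcap_inf.
  case: (HU n) => _ _ /(_ g h) Hn; apply: ltW; apply: (lt_le_trans Hn).
  rewrite lee_fin -[leRHS]invrK lef_pV2 ?posrE ?invr_gt0 ?ltr0n //.
  exact: ltW (truncnS_gt _).
Qed.
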